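(* For every $x\in\mathbb{C}$ and every $p\in\mathbb{N}$ we have in $\mathcal{A}_0$ $$(a+xb)^p=\sum_{j=0}^p\gamma_j(x)\binom{p}{j}b^ja^{p-j},$$ where $\gamma_0(x)=1$ and $\gamma_j(x):=x(x+1)\cdots(x+j-1)$ for $j\ge1$.
   Context: $\mathcal{A}_0$ is the $\mathbb{C}$-algebra of polynomials in two variables $a,b$ subject to the commutation relation $ab-ba=b^2$. *)

(* Defs.v *)
From HB Require Import structures.
From mathcomp Require Import all_boot all_order all_algebra.
From mathcomp Require Import complex.
From mathcomp Require Import reals.
Set Implicit Arguments. Unset Strict Implicit. Unset Printing Implicit Defensive.
Import Order.TTheory GRing.Theory Num.Theory.
Local Open Scope ring_scope.

Definition gamma {K : pzRingType} (j : nat) (x : K) : K :=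
  \prod_(i < j) (x + i%:R).

(* The defining relation of the Jordan plane A_0 = C<a,b>/(ab - ba - b^2). *)
Definition jordan_rel {T : pzRingType} (a b : T) : Prop := a * b - b * a = b ^+ 2.

(* Main.v *)
Require Import Defs.
From HB Require Import structures.
From mathcomp Require Import all_boot all_order all_algebra.
From mathcomp Require Import complex.
From mathcomp Require Import reals.
Import Order.TTheory GRing.Theory Num.Theory.
Local Open Scope ring_scope.
Lemma comm_bj (K : pzRingType) (A : lalgType K) (a b : A) (hab : jordan_rel a b) (j : nat) :
  a * b ^+ j = b ^+ j * a + b ^+ j.+1 *+ j.
Proof.
have h : a * b = b * a + b ^+ 2.
  by move: hab; rewrite /jordan_rel => <-; rewrite addrC subrK.
elim: j => [|j IH]; first by rewrite expr0 mulr1 mul1r mulr0n addr0.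
rewrite exprSr mulrA IH mulrDl -mulrA h mulrDr mulrA -exprSr mulrnAl -exprSr.
rewrite -exprD addn2 -addrA mulrS; congr (_ + _).
Qed.
Lemma step (K : comPzRingType) (A : lalgType K) (a b : A) (hab : jordan_rel a b) (x : K) (j n : nat) :
  (a + x *: b) * (b ^+ j * a ^+ n) = b ^+ j * a ^+ n.+1 + (x + j%:R) *: (b ^+ j.+1 * a ^+ n).
Proof.
rewrite mulrDl (mulrA a) (@comm_bj _ _ a b hab) mulrDl -mulrA -exprS -scalerAl (mulrA b) -exprS.
rewrite mulrnAl -scaler_nat scalerDl -addrA; congr (_ + _); by rewrite addrC.
Qed.

Lemma gammaS (K : pzRingType) j (x : K) : gamma j.+1 x = gamma j x * (x + j%:R).
Proof. by rewrite /gamma big_ord_recr. Qed.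

Lemma general_pow (K : comPzRingType) (A : algType K) (a b : A)
  (hab : jordan_rel a b) (x : K) (p : nat) :
  (a + x *: b) ^+ p =
  \sum_(j < p.+1) (gamma j x *+ 'C(p, j)) *: (b ^+ j * a ^+ (p - j)).
Proof.
elim: p => [|p IH].
  by rewrite big_ord1 expr0 /gamma big_ord0 !expr0 mulr1 scale1r.
rewrite exprS IH mulr_sumr.
under eq_bigr => j _ do rewrite -scalerAr step // scalerDr scalerA.
rewrite big_split /=.
rewrite [RHS]big_ord_recl /=.
under [X in _ = _ + X]eq_bigr => j _ do rewrite binS mulrnDr scalerDl.
rewrite big_split /= addrA; congr (_ + _).
  rewrite big_ord_recl [X in _ = _ + X]big_ord_recr /= /bump /=.
  rewrite (bin_small (ltnSn p)) mulr0n scale0r addr0.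
  rewrite !subn0 !bin0; congr (_ + _); apply: eq_bigr => j _.
  by rewrite subSS -subSn ?ltn_ord // add1n.
apply: eq_bigr => j _; rewrite /bump /= add1n gammaS subSS -mulrnAl; congr (_ *: _).

Qed.

Theorem corollary1p1p2 (R : realType) (A : algType (complex R)) (a b : A)
  (hab : jordan_rel a b) (x : complex R) (p : nat) :
  (a + x *: b) ^+ p =
  \sum_(j < p.+1) (gamma j x *+ 'C(p, j)) *: (b ^+ j * a ^+ (p - j)).
Proof. exact: general_pow. Qed.
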